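(* Let $k<m$ be positive integers such that $m\ne k(c^2-1)+1$ for every integer $c\ge 2$. Then there exists a single-category instance $I$ with $m$ goods, cardinality constraint $k$, and some number $n$ of agents with $kn\ge m$, such that $$\frac{\text{OPT-USW}(I)}{\max_{\mathcal{A}\in \mathcal{C}_k(I)}\text{USW}(\mathcal{A})}\ge \frac{1}{2}\left(-1+\sqrt{1+\frac{m-1}{k}}\right).$$
   Context: A single-category instance consists of $n$ agents and a set $M$ of $m$ indivisible goods; each agent $i$ has an additive utility function $u_i:2^M\to\mathbb{R}_{\ge 0}$ with $u_i(\emptyset)=0$ and $u_i(M)=1$. An allocation is a partition $(A_1,\dots,A_n)$ of $M$, agent $i$ receiving $A_i$. It is cardinal (for constraint $k$) if $|A_i|\le k$ for all $i$; $\mathcal{C}_k(I)$ is the set of cardinal allocations. $\text{USW}(\mathcal{A})=\sum_i u_i(A_i)$ and $\text{OPT-USW}(I)$ is its maximum over all allocations. *)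

(* Defs.v *)
From HB Require Import structures.
From mathcomp Require Import all_boot all_order all_algebra.
From mathcomp Require Import reals.
Set Implicit Arguments. Unset Strict Implicit. Unset Printing Implicit Defensive.
Import Order.TTheory GRing.Theory Num.Theory.
Local Open Scope ring_scope.

(* A single-category instance with n agents and m goods: an additive utility
   is determined by its values on single goods, u i g = u_i({g}). *)
Definition instance (R : realType) (n m : nat) := 'I_n -> 'I_m -> R.

Definition valid_instance (R : realType) (n m : nat) (u : instance R n m) : Prop :=
  (forall i g, 0 <= u i g) /\ (forall i, \sum_(g < m) u i g = 1).

(* An allocation (partition of the goods into n bundles) is given by the
   owner of each good: A_i = [set g | f g == i]. *)
Definition allocation (n m : nat) := {ffun 'I_m -> 'I_n}.

Definition bundle (n m : nat) (f : allocation n m) (i : 'I_n) : {set 'I_m} :=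
  [set g | f g == i].

Definition util (R : realType) (n m : nat) (u : instance R n m) (i : 'I_n)
  (S : {set 'I_m}) : R := \sum_(g in S) u i g.

Definition cardinal (n m k : nat) (f : allocation n m) : bool :=
  [forall i, #|bundle f i| <= k]%N.

Definition USW (R : realType) (n m : nat) (u : instance R n m) (f : allocation n m) : R :=
  \sum_(i < n) util u i (bundle f i).

(* OPT-USW: maximum over all allocations (USW >= 0, so 0 is a safe seed). *)
Definition OPT_USW (R : realType) (n m : nat) (u : instance R n m) : R :=
  \big[Num.max/0]_(f : allocation n m) USW u f.

Definition max_cardinal_USW (R : realType) (n m k : nat) (u : instance R n m) : R :=
  \big[Num.max/0]_(f : allocation n m | cardinal k f) USW u f.

(* Main.v *)
Require Import Defs.
From HB Require Import structures.
From mathcomp Require Import all_boot all_order all_algebra.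
From mathcomp Require Import reals.
From mathcomp Require Import ring lra zify.
Import Order.TTheory GRing.Theory Num.Theory.
Local Open Scope ring_scope.

Lemma sum_interval (R : realType) (n a b : nat) (r : R) :
  (a <= b <= n)%N ->
  \sum_(i < n) (if (a <= i < b)%N then r else 0) = r *+ (b - a).
Proof.
move=> /andP[hab hbn].
rewrite -(big_mkord xpredT (fun i => if (a <= i < b)%N then r else 0)).
rewrite (@big_cat_nat _ _ _ a) //=; last by apply: leq_trans hbn.
rewrite (@big_cat_nat _ _ _ b a n) //=.
rewrite big1_seq ?add0r; last first.
  by move=> i /andP[_]; rewrite mem_index_iota => /andP[_ hi]; rewrite leqNgt hi.
rewrite [X in _ + X]big1_seq ?addr0; last first.
  by move=> i /andP[_]; rewrite mem_index_iota => /andP[hi _]; rewrite ltnNge hi andbF.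
rewrite -(sumr_const_nat b a r).
apply: eq_big_nat => i /andP[h1 h2]; by rewrite h1 h2.
Qed.

Lemma sum_interval0 (R : realType) (n b : nat) (r : R) :
  (b <= n)%N ->
  \sum_(i < n) (if (i < b)%N then r else 0) = r *+ b.
Proof.
move=> hb; have := @sum_interval R n 0 b r; rewrite subn0 /= => <- //.
Qed.

Lemma USW_E (R : realType) n m (v : instance R n m) (f : allocation n m) :
  USW v f = \sum_(g < m) v (f g) g.
Proof.
rewrite /USW /util.
under eq_bigr do rewrite big_mkcond /=.
rewrite exchange_big /=; apply: eq_bigr => g _.
rewrite -big_mkcond /=.
under eq_bigl do rewrite inE eq_sym.
by rewrite big_pred1_eq.
Qed.

Lemma exists_c (k m : nat) : (0 < k)%N -> (k <= m)%N ->
  exists c : nat, [/\ (1 <= c)%N, (k * c * c <= m)%N & (m < k * c.+1 * c.+1)%N].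
Proof.
move=> hk hkm.
have ex : exists c, (k * c * c <= m)%N by exists 1%N; rewrite !muln1.
have bnd : forall c, (k * c * c <= m)%N -> (c <= m)%N.
  move=> c hc; apply: leq_trans hc.
  case: c => [//|c]; rewrite -mulnA; apply: (leq_trans _ (leq_pmull _ hk)).
  by rewrite leq_pmull.
exists (ex_maxn ex bnd).
case: ex_maxnP => c hc hmax; split => //.
- case: c hc hmax => [|//] _ h; have := h 1%N; rewrite !muln1 => /(_ hkm); by [].
- rewrite ltnNge; apply/negP => h; have := hmax _ h; by rewrite ltnn.
Qed.
Theorem lemma2 (R : realType) (k m : nat) :
  (0 < k)%N -> (k < m)%N ->
  (forall c : nat, (2 <= c)%N -> m <> (k * (c ^ 2 - 1) + 1)%N) ->
  exists (n : nat) (u : instance R n m),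
    valid_instance u /\ (m <= k * n)%N /\
    OPT_USW u / max_cardinal_USW k u >=
      (1 / 2) * (-1 + Num.sqrt (1 + (m%:R - 1) / k%:R)).
Proof.
move=> hk hkm _.
case: m hkm => [//|m'] hkm.
have hkm' : (k <= m')%N by [].
have [c [hc1 hcm hcm2]] := exists_c k m' hk hkm'.
pose K := (k * c)%N.
have hK : (0 < K)%N by rewrite /K muln_gt0 hk.
have hKR : (K%:R : R) != 0 by rewrite pnatr_eq0 -lt0n.
have hcK : (c * K <= m')%N by rewrite /K mulnC.
have hcm' : (c <= m')%N by apply: leq_trans hcm; nia.
pose v : instance R m'.+1 m'.+1 := fun i g => if (m' <= g < m'.+1)%N then 1 else 0.
pose u : instance R m'.+1 m'.+1 := fun i g =>
  if (i < c)%N then (if (i * K <= g < i * K + K)%N then (K%:R)^-1 else 0)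
  else v i g.
exists m'.+1, u.
have v1 : forall i, \sum_(g < m'.+1) v i g = 1.
  by move=> i; rewrite /v sum_interval ?leqnn ?andbT // -addn1 addKn.
split.
  split.
    move=> i g; rewrite /u /v; case: ifP => _; case: ifP => _ //.
    by rewrite invr_ge0 ler0n.
  move=> i; rewrite /u; case hi: (i < c)%N; last exact: v1.
  rewrite sum_interval; last first.
    apply/andP; split; first exact: leq_addr.
    apply: leq_trans (leq_trans _ hcK) (leqnSn _).
    rewrite /K; nia.
  by rewrite addKn -[_ *+ K]mulr_natr mulVf.
split; first by rewrite leq_pmull.
pose fs : allocation m'.+1 m'.+1 :=
  [ffun g : 'I_m'.+1 => if (g < c * K)%N then inord (g %/ K) else inord c].
have hOPT : (c.+1)%:R <= OPT_USW u.
  apply: le_trans (le_bigmax _ _ fs).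
  rewrite USW_E.
  have -> : \sum_(g < m'.+1) u (fs g) g =
     \sum_(g < m'.+1) ((if (g < c * K)%N then (K%:R)^-1 else 0) + v g g).
    apply: eq_bigr => g _; rewrite ffunE /u /v.
    case: (ltnP g (c * K)) => hg.
      have hgK : (g %/ K < c)%N by rewrite ltn_divLR.
      rewrite inordK; last exact: leq_trans hgK (leqW hcm').
      rewrite hgK /=.
      have -> : (g %/ K * K <= g < g %/ K * K + K)%N.
        apply/andP; split; first exact: leq_trunc_div.
        by rewrite {1}(divn_eq g K) ltn_add2l ltn_pmod.
      have -> : (m' <= g)%N = false by apply/negbTE; rewrite -ltnNge; apply: leq_trans hg hcK.
      by rewrite addr0.
    by rewrite inordK ?ltnS // ltnn add0r.
  rewrite big_split /=.
  rewrite [X in _ + X]sum_interval ?leqnn ?andbT // sum_interval0;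
    last exact: (leq_trans hcK).
  have -> : (m'.+1 - m')%N = 1%N by lia.
  rewrite -[_ *+ (c * K)]mulr_natr natrM mulrCA mulVf // mulr1.
  by rewrite -natr1.
pose f0 : allocation m'.+1 m'.+1 := [ffun g => g].
have hf0 : cardinal k f0.
  apply/forallP => i.
  have -> : bundle f0 i = [set i] by apply/setP => g; rewrite !inE ffunE.
  by rewrite cards1.
have hC1 : 1 <= max_cardinal_USW k u.
  apply: le_trans (le_bigmax_cond _ _ hf0).
  rewrite USW_E (bigD1 ord_max) //= ffunE.
  have -> : u ord_max ord_max = 1.
    by rewrite /u /v /= ltnNge hcm' /= leqnn ltnSn.
  rewrite lerDl; apply: sumr_ge0 => g _; rewrite ffunE /u /v.
  by case: ifP => _; case: ifP => _ //; rewrite invr_ge0 ler0n.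
have hC2 : max_cardinal_USW k u <= 2.
  apply: bigmax_le => [|f hf]; first by [].
  have hcR : (c%:R : R) != 0 by rewrite pnatr_eq0 -lt0n.
  apply: (@le_trans _ _ (\sum_(i < m'.+1) ((if (i < c)%N then (c%:R)^-1 else 0)
            + util v i (bundle f i)))).
    apply: ler_sum => i _; rewrite /util /u.
    case hi: (i < c)%N; last by rewrite add0r.
    apply: (@le_trans _ _ ((c%:R)^-1 + 0)); last first.
      by rewrite lerD2l; apply: sumr_ge0 => g _; rewrite /v; case: ifP.
    rewrite addr0.
    apply: (@le_trans _ _ (\sum_(g in bundle f i) (K%:R : R)^-1)).
      by apply: ler_sum => g _; case: ifP => _ //; rewrite invr_ge0 ler0n.
    rewrite sumr_const.
    move/forallP: hf => /(_ i) hb.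
    apply: (@le_trans _ _ ((K%:R : R)^-1 *+ k)); first by rewrite -[_ *+ #|_|]mulr_natr -[_ *+ k]mulr_natr ler_wpM2l ?invr_ge0 ?ler0n ?ler_nat.
    rewrite -[_ *+ k]mulr_natr /K natrM invfM mulrAC mulVf ?mul1r //.
    by rewrite pnatr_eq0 -lt0n.
  rewrite big_split /= sum_interval0; last by rewrite ltnW.
  rewrite -[_ *+ c]mulr_natr mulVf //.
  have -> : \sum_(i < m'.+1) util v i (bundle f i) = 1.
    rewrite -/(USW v f) USW_E /v sum_interval ?leqnn ?andbT //.
    by have -> : (m'.+1 - m')%N = 1%N by lia.
  by [].
have hC0 : 0 < max_cardinal_USW k u by apply: lt_le_trans ltr01 hC1.
rewrite ler_pdivlMr //.
have -> : ((m'.+1)%:R : R) - 1 = m'%:R by rewrite -natr1 addrK.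
have hkR : (0 : R) < k%:R by rewrite ltr0n.
have hnat : (k + m' <= k * (c + 2) * (c + 2))%N by nia.
move: hnat; rewrite -(ler_nat R) natrD !natrM natrD => hnat.
have hy1 : 1 <= 1 + m'%:R / k%:R :> R by rewrite lerDl divr_ge0.
have hyc : 1 + m'%:R / k%:R <= (c%:R + 2%:R) ^+ 2 :> R.
  rewrite -lerBrDl ler_pdivrMr //; nra.
have hs1 : 1 <= Num.sqrt (1 + m'%:R / k%:R) :> R by have := ler_wsqrtr hy1; rewrite sqrtr1.
have hs2 : Num.sqrt (1 + m'%:R / k%:R) <= c%:R + 2%:R :> R.
  apply: le_trans (ler_wsqrtr hyc) _.
  by rewrite sqrtr_sqr ger0_norm // addr_ge0.
move: hOPT; rewrite -natr1 => hOPT.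
have hc0 : (0 : R) <= c%:R by [].
set s := Num.sqrt _ in hs1 hs2 *.
set O := OPT_USW u in hOPT *.
set C := max_cardinal_USW k u in hC1 hC2 hC0 *.
nra.
Qed.
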